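(* Let $\mathbf{k}$ be a local field and $n\geq1$. Let $(G_m)_m$ be a sequence of subgroups of $\mathrm{Bir}(\mathbb{P}^n_{\mathbf{k}})$ converging to $\mathrm{id}$. Then there exist $m_0>0$ and $d>0$ such that $G_m\subset\mathrm{Bir}(\mathbb{P}^n_{\mathbf{k}})_{\leq d}$ for all $m\geq m_0$.
   Context: $\mathrm{Bir}(\mathbb{P}^n_{\mathbf{k}})_{\leq d}$ is the set of birational maps of degree $\leq d$. A sequence of subgroups $(G_m)$ converges to $\mathrm{id}$ if for every open neighbourhood $U$ of $\mathrm{id}$ there is $m_0$ with $G_m\subset U$ for all $m>m_0$. Topology: the Euclidean topology, i.e. for $d\geq1$, $W_d(\mathbf{k})$ is the projective space of classes of non-zero $(n+1)$-tuples of degree-$d$ homogeneous polynomials in $\mathbf{k}[x_0,\dots,x_n]$ modulo scalars with its Euclidean topology; $H_d(\mathbf{k})\subset W_d(\mathbf{k})$ the subset defining birational maps; $\mathrm{Bir}(\mathbb{P}^n_{\mathbf{k}})_{\leq d}$ gets the quotient topology via the natural surjection $\pi_d\colon H_d(\mathbf{k})\to\mathrm{Bir}(\mathbb{P}^n_{\mathbf{k}})_{\leq d}$, and $\mathrm{Bir}(\mathbb{P}^n_{\mathbf{k}})$ the inductive limit topology. *)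

(* Defs.v *)
From HB Require Import structures.
From mathcomp Require Import all_boot all_algebra.
From mathcomp Require Import mpoly.
From Stdlib Require Reals.

Set Implicit Arguments.
Unset Strict Implicit.
Unset Printing Implicit Defensive.

Import GRing.Theory.
Local Open Scope ring_scope.

Notation Real := Stdlib.Reals.Rdefinitions.R.
Notation Rlt := Stdlib.Reals.Rdefinitions.Rlt.
Notation Rle := Stdlib.Reals.Rdefinitions.Rle.
Notation Rplus := Stdlib.Reals.Rdefinitions.Rplus.
Notation Rmult := Stdlib.Reals.Rdefinitions.Rmult.
Notation R0 := Stdlib.Reals.Rdefinitions.R0.
Notation R1 := Stdlib.Reals.Rdefinitions.R1.

(* compact).  This covers R, C, finite extensions of Q_p, F_q((t)).     *)
Section LocalField.
Variables (k : fieldType) (abs : k -> Real).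

Definition is_absolute_value : Prop :=
  (forall x, Rle R0 (abs x)) /\
  (forall x, abs x = R0 <-> x = 0) /\
  (forall x y, abs (x * y) = Rmult (abs x) (abs y)) /\
  (forall x y, Rle (abs (x + y)) (Rplus (abs x) (abs y))).

Definition abs_nontrivial : Prop := exists x, abs x <> R0 /\ abs x <> R1.

Definition seq_converges (u : nat -> k) (l : k) : Prop :=
  forall eps, Rlt R0 eps -> exists N, forall j, (N <= j)%N -> Rlt (abs (u j - l)) eps.

Definition seq_cauchy (u : nat -> k) : Prop :=
  forall eps, Rlt R0 eps -> exists N, forall i j, (N <= i)%N -> (N <= j)%N ->
    Rlt (abs (u i - u j)) eps.

Definition abs_complete : Prop :=
  forall u, seq_cauchy u -> exists l, seq_converges u l.

Definition abs_locally_compact : Prop :=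
  exists r, Rlt R0 r /\
    forall u : nat -> k, (forall j, Rle (abs (u j)) r) ->
      exists (phi : nat -> nat) (l : k),
        (forall j, (phi j < phi j.+1)%N) /\ seq_converges (fun j => u (phi j)) l.

Definition local_field : Prop :=
  is_absolute_value /\ abs_nontrivial /\ abs_complete /\ abs_locally_compact.

End LocalField.

(* Birational maps of P^n_k, represented by (n+1)-tuples of            *)
(* homogeneous polynomials of the same degree in k[x_0,...,x_n].      *)
Section Cremona.
Variables (k : fieldType) (n : nat).

Definition ptuple := 'I_n.+1 -> {mpoly k[n.+1]}.

Definition homog_tuple (d : nat) (f : ptuple) : Prop :=
  forall i, f i \is d.-homog.

Definition pcomp (f g : ptuple) : ptuple :=
  fun i => f i \mPo [tuple g j | j < n.+1].

Definition pid : ptuple := fun i => 'X_i.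

Definition pinverse (f g : ptuple) : Prop :=
  (exists h, h != 0 /\ forall i, pcomp f g i = h * 'X_i) /\
  (exists h, h != 0 /\ forall i, pcomp g f i = h * 'X_i).

Definition is_bir (f : ptuple) : Prop :=
  (exists d, homog_tuple d f) /\
  exists g, (exists e, homog_tuple e g) /\ pinverse f g.

Definition bir_equiv (f g : ptuple) : Prop :=
  forall i j, f i * g j = f j * g i.

Definition in_H (d : nat) (f : ptuple) : Prop := homog_tuple d f /\ is_bir f.

Definition Bir_le (d : nat) (f : ptuple) : Prop :=
  exists g, in_H d g /\ bir_equiv g f.

(* A subset of Bir(P^n) is represented by a predicate on birational tuples
   invariant under bir_equiv. *)
Definition bir_saturated (U : ptuple -> Prop) : Prop :=
  forall f g, is_bir f -> is_bir g -> bir_equiv f g -> U f -> U g.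

Definition bir_subset (U V : ptuple -> Prop) : Prop :=
  forall f, is_bir f -> U f -> V f.

Definition bir_subgroup (G : ptuple -> Prop) : Prop :=
  bir_saturated G /\ G pid /\
  (forall f g, is_bir f -> is_bir g -> G f -> G g -> G (pcomp f g)) /\
  (forall f g, is_bir f -> is_bir g -> pinverse f g -> G f -> G g).

(* Openness for the Euclidean topology: U is open in Bir(P^n) (inductive
   limit topology) iff for each d >= 1, pi_d^{-1}(U) is open in H_d for the
   topology induced by W_d; on tuples this reads: every f in H_d with
   [f] in U has a coefficient-wise eps-neighbourhood whose members in H_d
   lie in U. *)
Definition bir_open (abs : k -> Real) (U : ptuple -> Prop) : Prop :=
  forall d, (1 <= d)%N -> forall f, in_H d f -> U f ->
    exists eps, Rlt R0 eps /\
      forall g, in_H d g ->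
        (forall i (m : 'X_{1..n.+1}), Rlt (abs ((g i)@_m - (f i)@_m)) eps) ->
        U g.

Definition converges_to_id (abs : k -> Real) (G : nat -> ptuple -> Prop) : Prop :=
  forall U, bir_saturated U -> bir_open abs U -> U pid ->
    exists m0, forall m, (m0 < m)%N -> bir_subset (G m) U.

End Cremona.

(* Main.v *)
Require Import Defs.
From HB Require Import structures.
From mathcomp Require Import all_boot all_algebra.
From mathcomp Require Import mpoly.
From Stdlib Require Import Reals Lra Classical ClassicalEpsilon.
From mathcomp Require Import ring.
Set Implicit Arguments. Unset Strict Implicit. Unset Printing Implicit Defensive.
Import GRing.Theory.
Local Open Scope ring_scope.
Section Alg.
Variables (k : fieldType) (n : nat).
Implicit Types (f g h q : ptuple k n).

Lemma X_neq0 (i : 'I_n.+1) : ('X_i : {mpoly k[n.+1]}) != 0.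
Proof.
apply/eqP => h; have := @mcoeffX n.+1 k U_(i) U_(i).
by rewrite h mcoeff0 eqxx => /esym/eqP; rewrite oner_eq0.
Qed.

Lemma X_homog (i : 'I_n.+1) : ('X_i : {mpoly k[n.+1]}) \is 1.-homog.
Proof. by rewrite dhomogX; apply/eqP; apply: mdeg1. Qed.

Lemma comp_scale (p : {mpoly k[n.+1]}) e (c : {mpoly k[n.+1]}) (t : ptuple k n) :
  p \is e.-homog ->
  p \mPo [tuple c * t j | j < n.+1] = c ^+ e * (p \mPo [tuple t j | j < n.+1]).
Proof.
move=> /dhomogP hp; rewrite !comp_mpolyE mulr_sumr big_seq [RHS]big_seq.
apply: eq_bigr => m hm.
rewrite -scalerAr; congr (_ *: _).
under eq_bigr do rewrite tnth_mktuple exprMn.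
rewrite big_split /= prodrXr -mdegE hp //.
by under [in RHS]eq_bigr do rewrite tnth_mktuple.
Qed.

Lemma pcomp0 (t : ptuple k n) : (0 : {mpoly k[n.+1]}) \mPo [tuple t j | j < n.+1] = 0.
Proof. exact: comp_mpoly0. Qed.

Lemma is_bir_nz f : is_bir f -> forall i, f i != 0.
Proof.
move=> [_ [g [_ [[h [hnz H]] _]]]] i; apply/eqP => fi0.
have := H i; rewrite /Defs.pcomp /= fi0 comp_mpoly0 => /esym/eqP.
by rewrite mulf_eq0 (negbTE hnz) (negbTE (X_neq0 i)).
Qed.

Lemma bir_equiv_refl f : bir_equiv f f.
Proof. by move=> i j; rewrite mulrC. Qed.

Lemma bir_equiv_trans f g q : (exists a, g a != 0) ->
  bir_equiv f g -> bir_equiv g q -> bir_equiv f q.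
Proof.
move=> [a ga] Hfg Hgq i l; apply: (mulfI ga).
have e1 := Hfg i a; have e2 := Hgq i l; have e3 := Hfg a l.
transitivity ((f i * g a) * q l); first by rewrite mulrCA mulrA.
rewrite e1 -mulrA e2 mulrA e3.
by rewrite -mulrA mulrCA.
Qed.

Lemma pid_inH : in_H 1 (@pid k n).
Proof.
have hom : homog_tuple 1 (@pid k n) by move=> i; exact: X_homog.
split=> //; split; first by exists 1%N.
exists (@pid k n); split; first by exists 1%N.
have E : forall i, Defs.pcomp (@pid k n) (@pid k n) i = 1 * 'X_i.
  move=> i; rewrite /Defs.pcomp /pid comp_mpolyXU mul1r.
  by rewrite -tnth_nth tnth_mktuple.
by split; exists 1; split => //; rewrite oner_eq0.
Qed.

Lemma Bir_le_S d f : Bir_le d f -> Bir_le d.+1 f.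
Proof.
move=> [g [[hg [_ [h [[e' he'] [[a [anz Ha]] [b [bnz Hb]]]]]]] Hgf]].
pose g' : ptuple k n := fun i => 'X_0 * g i.
exists g'; split; last first.
  by move=> i j; rewrite /g' -!mulrA Hgf.
have hg' : homog_tuple d.+1 g'.
  by move=> i; rewrite /g; have := dhomogM (X_homog 0) (hg i); rewrite add1n.
split => //; split; first by exists d.+1.
exists h; split; first by exists e'.
have h0 : h 0 != 0.
  apply/eqP => h00; have := Hb 0; rewrite /Defs.pcomp /= h00 comp_mpoly0 => /esym/eqP.
  by rewrite mulf_eq0 (negbTE bnz) (negbTE (X_neq0 0)).
split.
  exists (h 0 * a); split; first by rewrite mulf_neq0.
  move=> i; rewrite /Defs.pcomp /g' rmorphM /= comp_mpolyXU -tnth_nth tnth_mktuple.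
  by have := Ha i; rewrite /Defs.pcomp => ->; rewrite mulrA.
exists ('X_0 ^+ e' * b); split; first by rewrite mulf_neq0 // expf_neq0 // X_neq0.
move=> i; rewrite /Defs.pcomp /g'.
have -> : [tuple 'X_0 * g j | j < n.+1] = [tuple 'X_0 * g j | j < n.+1] by [].
rewrite (comp_scale _ _ (he' i)).
by have := Hb i; rewrite /Defs.pcomp => ->; rewrite mulrA.
Qed.

End Alg.

Section Ana.
Variables (k : fieldType) (n : nat) (abs : k -> Real).
Hypothesis habs : is_absolute_value abs.

Lemma abs_ge0 x : Rle R0 (abs x). Proof. by case: habs. Qed.
Lemma abs0 : abs 0 = R0. Proof. by case: habs => _ [H _]; exact: (proj2 (H 0) erefl). Qed.
Lemma absM x y : abs (x * y) = Rmult (abs x) (abs y). Proof. by case: habs => _ [_ [H _]]. Qed.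
Lemma absD x y : Rle (abs (x + y)) (Rplus (abs x) (abs y)). Proof. by case: habs => _ [_ [_ H]]. Qed.
Lemma abs_eq0 x : abs x = R0 -> x = 0. Proof. by case: habs => _ [H _]; exact: (proj1 (H x)). Qed.

Lemma absN x : abs (- x) = abs x.
Proof.
have h1 : abs 1 = R1.
  have := absM 1 1; rewrite mulr1 => e.
  have nz : abs 1 <> R0 by move/abs_eq0/eqP; rewrite oner_eq0.
  have := abs_ge0 1. clear -e nz. nra.
have hm : abs (-1) = R1.
  have := absM (-1) (-1); rewrite mulrNN mulr1 h1 => e.
  have := abs_ge0 (-1). clear -e. nra.
by rewrite -mulN1r absM hm; lra.
Qed.

Definition Ssum (q : {mpoly k[n.+1]}) (s : seq 'X_{1..n.+1}) : Real :=
  foldr (fun u acc => Rplus (abs q@_u) acc) R0 s.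

Lemma Ssum_ge0 q s : Rle R0 (Ssum q s).
Proof. elim: s => [|u s IH] /=; first lra. have := abs_ge0 q@_u; lra. Qed.

Lemma sum_bound (q : {mpoly k[n.+1]}) (c : 'X_{1..n.+1} -> k) eps :
  (forall u, Rle (abs (c u)) eps) -> forall s,
  Rle (abs (\sum_(u <- s) q@_u * c u)) (Rmult eps (Ssum q s)).
Proof.
move=> hc; elim=> [|u s IH]; first by rewrite big_nil abs0 /=; lra.
rewrite big_cons /=.
have := absD (q@_u * c u) (\sum_(j <- s) q@_j * c j).
rewrite absM. have := hc u. have := abs_ge0 q@_u. move: IH.
set A := abs (\sum_(j <- s) q@_j * c j). set B := abs q@_u. set C := abs (c u).
set S := Ssum q s. set T := abs _.
move=> *; nra.
Qed.

Lemma coefMX (D : {mpoly k[n.+1]}) u m :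
  (exists m', (D * 'X_[u])@_m = D@_m') \/ (D * 'X_[u])@_m = 0.
Proof.
case: (boolP (m \in msupp (D * 'X_[u]))) => hm; last by right; apply: memN_msupp_eq0.
left; move: hm; rewrite (perm_mem (msuppMX D u)) => /mapP [m' _ ->].
by exists m'; rewrite mcoeffMX.
Qed.

Lemma prod_bound (D q : {mpoly k[n.+1]}) m eps : Rlt R0 eps ->
  (forall m', Rlt (abs D@_m') eps) ->
  Rle (abs (D * q)@_m) (Rmult eps (Ssum q (msupp q))).
Proof.
move=> he hD.
have -> : (D * q)@_m = \sum_(u <- msupp q) q@_u * (D * 'X_[u])@_m.
  rewrite {1}[q]mpolyE mulr_sumr raddf_sum /=.
  by apply: eq_bigr => u _; rewrite -scalerAr mcoeffZ.
apply: sum_bound => u.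
case: (coefMX D u m) => [[m' ->]|->]; first by have := hD m'; lra.
rewrite abs0; lra.
Qed.


Lemma sep (f q : ptuple k n) : ~ bir_equiv f q -> exists eps, Rlt R0 eps /\
  forall g : ptuple k n, (forall i m, Rlt (abs ((g i)@_m - (f i)@_m)) eps) -> ~ bir_equiv g q.
Proof.
move=> hne.
have [i [l hil]] : exists i l, f i * q l <> f l * q i.
  apply: NNPP => H; apply: hne => i l; apply: NNPP => H'; apply: H; exists i, l; exact: H'.
set P := f i * q l - f l * q i.
have [m hm] : exists m, P@_m <> 0.
  apply: NNPP => H; apply: hil; apply/eqP; rewrite -subr_eq0; apply/eqP/mpolyP => m.
  rewrite mcoeff0; apply: NNPP => H'; apply: H; exists m; exact: H'.
set a := abs P@_m.
have ha : Rlt R0 a.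
  have := abs_ge0 P@_m; have : a <> R0 by move/abs_eq0. rewrite -/a. lra.
set S1 := Ssum (q i) (msupp (q i)). set S2 := Ssum (q l) (msupp (q l)).
have h1 := Ssum_ge0 (q i) (msupp (q i)). have h2 := Ssum_ge0 (q l) (msupp (q l)).
rewrite -/S1 -/S2 in h1 h2.
set C := Rplus (Rplus S1 S2) R1.
have hC : Rlt R0 C by rewrite /C; lra.
have heC : Rmult (Rdiv a C) C = a.
  by rewrite /Rdiv Rmult_assoc Rinv_l ?Rmult_1_r //; lra.
exists (Rdiv a C); split; first exact: Rdiv_lt_0_compat.
move=> g hg heq.
set eps := Rdiv a C in heC hg.
have he : Rlt R0 eps by exact: Rdiv_lt_0_compat.
pose D x := g x - f x.
have hD : forall x m', Rlt (abs (D x)@_m') eps by move=> x m'; rewrite /D mcoeffB.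
have eP : P = D l * q i - D i * q l.
  rewrite /P /D !mulrBl; have := heq i l => e; rewrite -[g i * q l]/(g i * q l) e.
  ring.
have b1 := prod_bound (q i) m he (hD l).
have b2 := prod_bound (q l) m he (hD i).
have := absD (D l * q i)@_m (- (D i * q l)@_m).
rewrite absN -mcoeffB -eP -/a -/S1 -/S2 in b1 b2 *.
rewrite -/S1 -/S2 in b1 b2.
move=> hh; rewrite /C in heC; nra.
Qed.

End Ana.

Lemma Bir_le_mono (k : fieldType) (n : nat) (e d : nat) (f : ptuple k n) :
  leq e d -> Bir_le e f -> Bir_le d f.
Proof.
elim: d => [|d IH]; first by rewrite leqn0 => /eqP ->.
rewrite leq_eqVlt => /orP [/eqP -> //|]; rewrite ltnS => h hB.
exact: Bir_le_S (IH h hB).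
Qed.

Lemma near_lemma (k : fieldType) (n : nat) (abs : k -> Real)
  (habs : is_absolute_value abs) (f : ptuple k n) (gs : nat -> ptuple k n) :
  (forall j, ~ bir_equiv f (gs j)) ->
  forall N, exists eps, Rlt R0 eps /\ forall g : ptuple k n,
      (forall i m, Rlt (abs ((g i)@_m - (f i)@_m)) eps) ->
      forall j, (j < N)%nat -> ~ bir_equiv g (gs j).
Proof.
move=> Uf.
elim => [|N [e [he H]]]; first by exists R1; split; [lra | by []].
have [e' [he' H']] := sep habs (Uf N).
exists (Rmin e e'); split; first by apply: Rmin_pos.
move=> g hg j; rewrite ltnS leq_eqVlt => /orP [/eqP ->|hj].
  apply: H' => i m; apply: Rlt_le_trans (hg i m) _; exact: Rmin_r.
apply: H hj => i m; apply: Rlt_le_trans (hg i m) _; exact: Rmin_l.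
Qed.

Close Scope ring_scope.

Theorem lemma4p3 (k : fieldType) (abs : k -> Real) (Hk : local_field abs)
  (n : nat) (Hn : (1 <= n)%N)
  (G : nat -> ptuple k n -> Prop)
  (HG : forall m, bir_subgroup (G m))
  (Hconv : converges_to_id abs G) :
  exists m0 d, (0 < m0)%N /\ (0 < d)%N /\
    forall m, (m0 <= m)%N -> bir_subset (G m) (Bir_le d).
Proof.
case: Hk => habs _.
apply: NNPP => Hno.
have bad : forall j : nat, exists p : nat * ptuple k n,
    (j < p.1)%N /\ G p.1 p.2 /\ is_bir p.2 /\ ~ Bir_le j.+1 p.2.
  move=> j; apply: NNPP => H; apply: Hno; exists j.+1, j.+1; do 2 split => //.
  move=> m hm f hf Gf; apply: NNPP => hB; apply: H; exists (m, f); split => //=.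
pose pick j := proj1_sig (constructive_indefinite_description _ (bad j)).
have hpick : forall j, (j < (pick j).1)%N /\ G (pick j).1 (pick j).2 /\
    is_bir (pick j).2 /\ ~ Bir_le j.+1 (pick j).2.
  move=> j; exact: (proj2_sig (constructive_indefinite_description _ (bad j))).
pose gs j := (pick j).2.
have notle : forall j e, (e <= j.+1)%N -> ~ Bir_le e (gs j).
  move=> j e he hB; have [_ [_ [_ H]]] := hpick j; apply: H.
  exact: Bir_le_mono he hB.
pose U (f : ptuple k n) := forall j, ~ bir_equiv f (gs j).
have satU : bir_saturated U.
  move=> f g hf hg hfg Uf j hgj; apply: (Uf j).
  apply: bir_equiv_trans hfg hgj; exists ord0; exact: is_bir_nz hg ord0.
have Upid : U (@pid k n).
  move=> j h; apply: (notle j 1%N _); first by [].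
  exists (@pid k n); split; [exact: pid_inH | exact: h].
have openU : bir_open abs U.
  move=> d hd f hf Uf.
  have near := near_lemma habs Uf.
  have [eps [he H]] := near d.
  exists eps; split => // g hg hclose j hj.
  case: (ltnP j d) => hjd; first exact: H hclose j hjd hj.
  apply: (notle j d); first by apply: leq_trans hjd _.
  by exists g.
have [m0 Hm0] := Hconv U satU openU Upid.
have [hlt [hG [hb _]]] := hpick m0.
by apply: (Hm0 _ hlt (gs m0) hb hG m0); exact: bir_equiv_refl.
Qed.
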